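(* Let $d^{gen}_{GH}$ be any one of $d_{GH},d^{us}_{GH},d^{ls}_{GH},d^{rc}_{GH}$, and let $X,Y$ be nonempty metric spaces. Then: (1) $2d^{gen}_{GH}(\Delta_1,X)=\operatorname{diam}X$; (2) $2d^{gen}_{GH}(X,Y)\le\max\{\operatorname{diam}X,\operatorname{diam}Y\}$; (3) if $\operatorname{diam}X<\infty$ or $\operatorname{diam}Y<\infty$, then $|\operatorname{diam}X-\operatorname{diam}Y|\le 2d^{gen}_{GH}(X,Y)$; (4) if $\operatorname{diam}X<\infty$, then for all $\lambda,\mu\ge0$, $2d^{gen}_{GH}(\lambda X,\mu X)=|\lambda-\mu|\operatorname{diam}X$; (5) for every $\lambda>0$, $d^{gen}_{GH}(\lambda X,\lambda Y)=\lambda\, d^{gen}_{GH}(X,Y)$, and if $X,Y$ are bounded this also holds for $\lambda=0$; (6) if $X$ and $Y$ are discrete metric spaces, then $d^{gen}_{GH}(X,Y)=d_{GH}(X,Y)$; (7) if a sequence of metric spaces $X_n$ satisfies $d^{gen}_{GH}(X_n,X)\to0$, then $d_{GH}(X_n,X)\to0$.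
   Context: For a metric space, $|xy|$ denotes distance, $\operatorname{diam}X=\sup\{|xy|:x,y\in X\}$, $\Delta_1$ is the one-point metric space, $\lambda X$ for $\lambda>0$ is $X$ with all distances multiplied by $\lambda$, and $0X=\Delta_1$ for bounded $X$. A set-valued map $f:X\rightrightarrows Y$ assigns to each $x\in X$ a nonempty $f(x)\subseteq Y$ and is identified with its graph. A correspondence between $X$ and $Y$ is a subset $R\subseteq X\times Y$ whose projections to $X$ and to $Y$ are both surjective, regarded as the set-valued map $x\mapsto R(x)=\{y:(x,y)\in R\}$; $R^{-1}=\{(y,x):(x,y)\in R\}$; $\mathcal R(X,Y)$ is the set of all correspondences. The distortion of a nonempty $\sigma\subseteq X\times Y$ is $\operatorname{dis}\sigma=\sup\{||xx'|-|yy'||:(x,y),(x',y')\in\sigma\}\in[0,\infty]$. A set-valued map $f$ between topological spaces is upper semicontinuous if for every $x$ and every open $U\supseteq f(x)$ there is a neighborhood $V$ of $x$ with $f(x')\subseteq U$ for all $x'\in V$; lower semicontinuous if for every $x$ and every open $U$ with $f(x)\cap U\ne\emptyset$ there is a neighborhood $V$ of $x$ with $f(x')\cap U\neq\emptyset$ for all $x'\in V$; continuous if both. $\mathcal R_{us}(X,Y)$ (resp. $\mathcal R_{ls}(X,Y)$, $\mathcal R_{rc}(X,Y)$) is the set of $R\in\mathcal R(X,Y)$ such that both $R$ and $R^{-1}$ are upper semicontinuous (resp. lower semicontinuous, continuous). Then $d_{GH}(X,Y)=\frac12\inf\{\operatorname{dis}R:R\in\mathcal R(X,Y)\}$, and $d^{us}_{GH},d^{ls}_{GH},d^{rc}_{GH}$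 are defined by the same formula with $\mathcal R$ replaced by $\mathcal R_{us},\mathcal R_{ls},\mathcal R_{rc}$ respectively. *)

(* Defs.v *)
From Stdlib Require Import Reals Lra.
From Coquelicot Require Import Coquelicot.
Open Scope R_scope.

Record MetricSpace := {
  carrier :> Type;
  dist : carrier -> carrier -> R;
  dist_refl : forall x, dist x x = 0;
  dist_sep : forall x y, dist x y = 0 -> x = y;
  dist_sym : forall x y, dist x y = dist y x;
  dist_tri : forall x y z, dist x z <= dist x y + dist y z
}.

Arguments dist {m} _ _.

Definition nonempty (X : MetricSpace) : Prop := exists x : X, True.

Definition diam (X : MetricSpace) : Rbar :=
  Lub_Rbar (fun r => exists x y : X, r = dist x y).

Definition Delta1 : MetricSpace.
Proof.
  refine {| carrier := unit; dist := fun _ _ => 0 |}.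
  - reflexivity.
  - intros [] [] _; reflexivity.
  - reflexivity.
  - intros; lra.
Defined.

Definition scale_pos (l : R) (hl : 0 < l) (X : MetricSpace) : MetricSpace.
Proof.
  refine {| carrier := carrier X; dist := fun x y => l * dist x y |}.
  - intros x; rewrite dist_refl; ring.
  - intros x y h. apply dist_sep.
    destruct (Rmult_integral _ _ h) as [h'|h']; [lra|exact h'].
  - intros x y; rewrite dist_sym; reflexivity.
  - intros x y z. pose proof (dist_tri X x y z). nra.
Defined.

(** lambda X : equals the rescaled space for lambda > 0, and Delta_1 for
    lambda <= 0 (only used for lambda = 0, i.e. 0X = Delta_1, and only for
    bounded X, as in the paper). *)
Definition scale (l : R) (X : MetricSpace) : MetricSpace :=
  match Rlt_dec 0 l with
  | left h => scale_pos l h X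
  | right _ => Delta1
  end.

Definition is_open {X : MetricSpace} (U : X -> Prop) : Prop :=
  forall x, U x -> exists eps, 0 < eps /\ forall y, dist x y < eps -> U y.

(** Set-valued maps / relations, identified with their graphs:
    f : A -> B -> Prop, f x y means y in f(x). *)
Definition upper_semicont {A B : MetricSpace} (f : A -> B -> Prop) : Prop :=
  forall (x : A) (U : B -> Prop), is_open U -> (forall y, f x y -> U y) ->
    exists V : A -> Prop, is_open V /\ V x /\
      forall x', V x' -> forall y, f x' y -> U y.

Definition lower_semicont {A B : MetricSpace} (f : A -> B -> Prop) : Prop :=
  forall (x : A) (U : B -> Prop), is_open U -> (exists y, f x y /\ U y) ->
    exists V : A -> Prop, is_open V /\ V x /\
      forall x', V x' -> exists y, f x' y /\ U y.

Definition continuous_svm {A B : MetricSpace} (f : A -> B -> Prop) : Prop :=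
  upper_semicont f /\ lower_semicont f.

Definition rel_inv {A B : Type} (R : A -> B -> Prop) : B -> A -> Prop :=
  fun y x => R x y.

Definition is_corr {X Y : MetricSpace} (R : X -> Y -> Prop) : Prop :=
  (forall x, exists y, R x y) /\ (forall y, exists x, R x y).

Definition dis {X Y : MetricSpace} (R : X -> Y -> Prop) : Rbar :=
  Lub_Rbar (fun r => exists x x' y y', R x y /\ R x' y' /\
                       r = Rabs (dist x x' - dist y y')).

Inductive gh_kind := GH_all | GH_us | GH_ls | GH_rc.

Definition admissible (k : gh_kind) {X Y : MetricSpace} (R : X -> Y -> Prop) : Prop :=
  is_corr R /\
  match k with
  | GH_all => True
  | GH_us => upper_semicont R /\ upper_semicont (rel_inv R)
  | GH_ls => lower_semicont R /\ lower_semicont (rel_inv R)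
  | GH_rc => continuous_svm R /\ continuous_svm (rel_inv R)
  end.

(** d^k_GH(X,Y) = 1/2 inf { dis R : R admissible } in [0,+oo]
    (inf of the empty set = +oo; correspondences with infinite distortion do
    not affect the infimum). *)
Definition dGH (k : gh_kind) (X Y : MetricSpace) : Rbar :=
  Rbar_mult (/ 2) (Glb_Rbar (fun r => exists R : X -> Y -> Prop,
                                 admissible k R /\ dis R = Finite r)).

Definition discrete (X : MetricSpace) : Prop :=
  forall x : X, exists eps, 0 < eps /\ forall y : X, dist x y < eps -> y = x.

Definition Rbar_to0 (u : nat -> Rbar) : Prop :=
  forall eps, 0 < eps -> exists N, forall n, (N <= n)%nat -> Rbar_lt (u n) (Finite eps).

Definition Rbar_max (a b : Rbar) : Rbar :=
  match Rbar_le_dec a b with left _ => b | right _ => a end.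

(* Main.v *)
Require Import Defs.
From Stdlib Require Import Reals Lra.
From Coquelicot Require Import Coquelicot.
Open Scope R_scope.

Lemma mpinf c : 0 < c -> Rbar_mult (Finite c) p_infty = p_infty.
Proof. intros H. unfold Rbar_mult, Rbar_mult'. destruct (Rle_dec 0 c); [|lra].
  destruct (Rle_lt_or_eq_dec 0 c r); [reflexivity|lra]. Qed.
Lemma mminf c : 0 < c -> Rbar_mult (Finite c) m_infty = m_infty.
Proof. intros H. unfold Rbar_mult, Rbar_mult'. destruct (Rle_dec 0 c); [|lra].
  destruct (Rle_lt_or_eq_dec 0 c r); [reflexivity|lra]. Qed.
Lemma mfin c x : Rbar_mult (Finite c) (Finite x) = Finite (c * x).
Proof. reflexivity. Qed.

Lemma twice_half g : Rbar_mult 2 (Rbar_mult (/2) g) = g.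
Proof.
  destruct g as [g| |].
  - rewrite !mfin. f_equal. field.
  - rewrite mpinf by lra. rewrite mpinf by lra. reflexivity.
  - rewrite mminf by lra. rewrite mminf by lra. reflexivity.
Qed.

Lemma half_comm l g : 0 < l -> Rbar_mult (/2) (Rbar_mult l g) = Rbar_mult l (Rbar_mult (/2) g).
Proof.
  intros Hl. destruct g as [g| |].
  - rewrite !mfin. f_equal. ring.
  - rewrite !mpinf by lra. reflexivity.
  - rewrite !mminf by lra. reflexivity.
Qed.

Lemma half_le a b : Rbar_le a b -> Rbar_le (Rbar_mult (/2) a) (Rbar_mult (/2) b).
Proof.
  intros H. destruct a as [a| |], b as [b| |]; simpl in H; try contradiction;
  rewrite ?mfin, ?mpinf, ?mminf by lra; simpl; try lra; trivial.
Qed.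

Lemma Lub_scale E c : 0 < c ->
  Lub_Rbar (fun r => exists s, E s /\ r = c * s) = Rbar_mult c (Lub_Rbar E).
Proof.
  intros Hc. apply is_lub_Rbar_unique.
  destruct (Lub_Rbar_correct E) as [Hub Hl].
  split.
  - intros r [s [Es ->]]. specialize (Hub s Es).
    destruct (Lub_Rbar E) as [L| |]; simpl in Hub; try contradiction;
    rewrite ?mfin, ?mpinf, ?mminf by lra; simpl; trivial.
    apply Rmult_le_compat_l; lra.
  - intros b Hb.
    assert (H1 : is_ub_Rbar E (Rbar_mult (/c) b)).
    { intros s Es. specialize (Hb (c*s) (ex_intro _ s (conj Es eq_refl))).
      destruct b as [b| |]; simpl in Hb; try contradiction;
      rewrite ?mfin, ?mpinf, ?mminf; try (apply Rinv_0_lt_compat; lra); simpl; trivial.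
      apply (Rmult_le_reg_l c); [lra|]. field_simplify; lra. }
    specialize (Hl _ H1). assert (Hc' : 0 < / c) by (apply Rinv_0_lt_compat; lra).
    destruct (Lub_Rbar E) as [L| |], b as [b| |];
    clear H1; rewrite ?mfin, ?mpinf, ?mminf in Hl by lra;
    rewrite ?mfin, ?mpinf, ?mminf by lra; simpl in *; try contradiction; trivial.
    apply (Rmult_le_reg_l (/c)); [apply Rinv_0_lt_compat; lra|]. field_simplify; lra.
Qed.

Lemma Glb_scale E c : 0 < c ->
  Glb_Rbar (fun r => exists s, E s /\ r = c * s) = Rbar_mult c (Glb_Rbar E).
Proof.
  intros Hc. apply is_glb_Rbar_unique.
  destruct (Glb_Rbar_correct E) as [Hub Hl].
  split.
  - intros r [s [Es ->]]. specialize (Hub s Es).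
    destruct (Glb_Rbar E) as [L| |]; simpl in Hub; try contradiction;
    rewrite ?mfin, ?mpinf, ?mminf by lra; simpl; trivial.
    apply Rmult_le_compat_l; lra.
  - intros b Hb.
    assert (H1 : is_lb_Rbar E (Rbar_mult (/c) b)).
    { intros s Es. specialize (Hb (c*s) (ex_intro _ s (conj Es eq_refl))).
      destruct b as [b| |]; simpl in Hb; try contradiction;
      rewrite ?mfin, ?mpinf, ?mminf; try (apply Rinv_0_lt_compat; lra); simpl; trivial.
      apply (Rmult_le_reg_l c); [lra|]. field_simplify; lra. }
    specialize (Hl _ H1). assert (Hc' : 0 < / c) by (apply Rinv_0_lt_compat; lra).
    destruct (Glb_Rbar E) as [L| |], b as [b| |];
    clear H1; rewrite ?mfin, ?mpinf, ?mminf in Hl by lra;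
    rewrite ?mfin, ?mpinf, ?mminf by lra; simpl in *; try contradiction; trivial.
    apply (Rmult_le_reg_l (/c)); [apply Rinv_0_lt_compat; lra|]. field_simplify; lra.
Qed.

Lemma dist_nonneg (X : MetricSpace) (x y : X) : 0 <= Defs.dist x y.
Proof. pose proof (Defs.dist_tri X x y x). rewrite Defs.dist_refl, (Defs.dist_sym X y x) in H. lra. Qed.

Lemma diam_ge (X : MetricSpace) (x y : X) : Rbar_le (Defs.dist x y) (diam X).
Proof. apply (proj1 (Lub_Rbar_correct _)). eauto. Qed.

Lemma diam_lub (X : MetricSpace) b : (forall x y : X, Rbar_le (Defs.dist x y) b) -> Rbar_le (diam X) b.
Proof. intros H. apply (proj2 (Lub_Rbar_correct _)). intros r [x [y ->]]. apply H. Qed.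

Lemma diam_nonneg (X : MetricSpace) : nonempty X -> Rbar_le 0 (diam X).
Proof. intros [x _]. pose proof (diam_ge X x x). rewrite Defs.dist_refl in H. exact H. Qed.

Lemma dis_ge {X Y : MetricSpace} (R : X -> Y -> Prop) x x' y y' :
  R x y -> R x' y' -> Rbar_le (Rabs (Defs.dist x x' - Defs.dist y y')) (dis R).
Proof. intros H1 H2. apply (proj1 (Lub_Rbar_correct _)). exists x, x', y, y'; auto. Qed.

Lemma dis_lub {X Y : MetricSpace} (R : X -> Y -> Prop) b :
  (forall x x' y y', R x y -> R x' y' -> Rbar_le (Rabs (Defs.dist x x' - Defs.dist y y')) b) ->
  Rbar_le (dis R) b.
Proof. intros H. apply (proj2 (Lub_Rbar_correct _)). intros r (x&x'&y&y'&H1&H2&->). auto. Qed.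

Lemma dis_nonneg {X Y : MetricSpace} (R : X -> Y -> Prop) :
  is_corr R -> nonempty X -> Rbar_le 0 (dis R).
Proof. intros [H1 _] [x _]. destruct (H1 x) as [y Hy].
  pose proof (dis_ge R x x y y Hy Hy). rewrite !Defs.dist_refl in H.
  replace (Rabs (0-0)) with 0 in H by (rewrite Rminus_0_r, Rabs_R0; reflexivity). exact H. Qed.

Lemma diam_Delta1 : diam Delta1 = Finite 0.
Proof. apply is_lub_Rbar_unique. split.
  - intros r [x [y ->]]. simpl. lra.
  - intros b Hb. apply Hb. exists tt, tt. reflexivity. Qed.

Lemma scale_pos_eq l X : 0 < l -> exists h, scale l X = scale_pos l h X.
Proof. intros H. unfold scale. destruct (Rlt_dec 0 l); [eauto|lra]. Qed.

Lemma scale_0 l X : ~ 0 < l -> scale l X = Delta1.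
Proof. intros H. unfold scale. destruct (Rlt_dec 0 l); [contradiction|reflexivity]. Qed.

Lemma diam_scale l h X : diam (scale_pos l h X) = Rbar_mult l (diam X).
Proof. unfold diam. rewrite <- Lub_scale by exact h. apply Lub_Rbar_eqset.
  intros r; split.
  - intros [x [y ->]]. exists (Defs.dist (m:=X) x y). split; [eauto|reflexivity].
  - intros [s [[x [y ->]] ->]]. exists x, y. reflexivity. Qed.

Lemma dis_scale l h1 h2 (X Y : MetricSpace) (R : X -> Y -> Prop) :
  dis (X := scale_pos l h1 X) (Y := scale_pos l h2 Y) R = Rbar_mult l (dis R).
Proof. unfold dis. rewrite <- Lub_scale by exact h1. apply Lub_Rbar_eqset.
  assert (E : forall a b, Rabs (l * a - l * b) = l * Rabs (a - b)).
  { intros a b. replace (l*a - l*b) with (l*(a-b)) by ring. rewrite Rabs_mult, Rabs_pos_eq; lra. }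
  intros r; split.
  - intros (x&x'&y&y'&H1&H2&->). simpl. rewrite E. eexists; split; [|reflexivity].
    exists x, x', y, y'; auto.
  - intros [s [(x&x'&y&y'&H1&H2&->) ->]]. exists x, x', y, y'. simpl. rewrite E. auto. Qed.

Lemma scale_open l h (X : MetricSpace) (U : X -> Prop) :
  is_open (X := scale_pos l h X) U <-> is_open (X := X) U.
Proof. split; intros H x Ux; destruct (H x Ux) as [e [He HU]].
  - exists (e / l). split; [apply Rdiv_lt_0_compat; lra|]. intros y Hy. apply HU. simpl.
    apply (Rmult_lt_compat_l l) in Hy; [|lra]. field_simplify in Hy; lra.
  - exists (e * l). split; [nra|]. intros y Hy. apply HU. simpl in Hy.
    apply (Rmult_lt_reg_l l); [lra|]. lra. Qed.

Lemma usc_scale l h1 h2 (X Y : MetricSpace) (R : X -> Y -> Prop) :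
  upper_semicont (A := scale_pos l h1 X) (B := scale_pos l h2 Y) R <-> upper_semicont (A := X) (B := Y) R.
Proof. unfold upper_semicont; split; intros H x U HU Hx.
  - destruct (H x U) as [V [HV [Vx HVU]]]; [apply (scale_open l h2 Y U); exact HU|exact Hx|].
    exists V. split; [apply (scale_open l h1 X V); exact HV|auto].
  - destruct (H x U) as [V [HV [Vx HVU]]]; [apply (scale_open l h2 Y U); exact HU|exact Hx|].
    exists V. split; [apply (scale_open l h1 X V); exact HV|auto].
Qed.

Lemma lsc_scale l h1 h2 (X Y : MetricSpace) (R : X -> Y -> Prop) :
  lower_semicont (A := scale_pos l h1 X) (B := scale_pos l h2 Y) R <-> lower_semicont (A := X) (B := Y) R.
Proof. unfold lower_semicont; split; intros H x U HU Hx.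
  - destruct (H x U) as [V [HV [Vx HVU]]]; [apply (scale_open l h2 Y U); exact HU|exact Hx|].
    exists V. split; [apply (scale_open l h1 X V); exact HV|auto].
  - destruct (H x U) as [V [HV [Vx HVU]]]; [apply (scale_open l h2 Y U); exact HU|exact Hx|].
    exists V. split; [apply (scale_open l h1 X V); exact HV|auto].
Qed.

Lemma adm_scale k l h1 h2 (X Y : MetricSpace) (R : X -> Y -> Prop) :
  admissible k (X := scale_pos l h1 X) (Y := scale_pos l h2 Y) R <-> admissible k (X := X) (Y := Y) R.
Proof.
  pose proof (usc_scale l h1 h2 X Y R). pose proof (usc_scale l h2 h1 Y X (rel_inv R)).
  pose proof (lsc_scale l h1 h2 X Y R). pose proof (lsc_scale l h2 h1 Y X (rel_inv R)).
  unfold admissible, continuous_svm. destruct k; tauto.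
Qed.

Lemma full_adm k (X Y : MetricSpace) : nonempty X -> nonempty Y ->
  admissible k (X := X) (Y := Y) (fun _ _ => True).
Proof.
  intros [x0 _] [y0 _].
  assert (Hop : forall Z : MetricSpace, is_open (X := Z) (fun _ => True)).
  { intros Z z _. exists 1. split; [lra|auto]. }
  assert (U1 : forall A B : MetricSpace, upper_semicont (A := A) (B := B) (fun _ _ => True)).
  { intros A B x U HU Hx. exists (fun _ => True). split; [apply Hop|]. split; auto. }
  assert (L1 : forall A B : MetricSpace, lower_semicont (A := A) (B := B) (fun _ _ => True)).
  { intros A B x U HU [y [_ Hy]]. exists (fun _ => True). split; [apply Hop|]. split; eauto. }
  split. { split; intros; eauto. }
  unfold continuous_svm, rel_inv. destruct k; repeat split; auto.
Qed.

Lemma id_adm k l m h1 h2 (X : MetricSpace) :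
  admissible k (X := scale_pos l h1 X) (Y := scale_pos m h2 X) (fun x y => x = y).
Proof.
  assert (U1 : forall a b ha hb (R : X -> X -> Prop), (forall x y, R x y <-> x = y) ->
     upper_semicont (A := scale_pos a ha X) (B := scale_pos b hb X) R).
  { intros a b ha hb R HR x U HU Hx. exists U. split.
    - apply (scale_open a ha X U). apply (scale_open b hb X U). exact HU.
    - split; [apply Hx; apply HR; reflexivity|]. intros x' Hx' y Hy. apply HR in Hy. subst. exact Hx'. }
  assert (L1 : forall a b ha hb (R : X -> X -> Prop), (forall x y, R x y <-> x = y) ->
     lower_semicont (A := scale_pos a ha X) (B := scale_pos b hb X) R).
  { intros a b ha hb R HR x U HU [y [Hy Uy]]. apply HR in Hy. subst. exists U. split.
    - apply (scale_open a ha X U). apply (scale_open b hb X U). exact HU.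
    - split; [exact Uy|]. intros x' Hx'. exists x'. split; auto. apply HR. reflexivity. }
  split. { split; intros x; exists x; reflexivity. }
  unfold continuous_svm, rel_inv.
  destruct k; repeat split; (apply U1 || apply L1); intros; split; auto.
Qed.

Definition Sset k (X Y : MetricSpace) : R -> Prop :=
  fun r => exists R : X -> Y -> Prop, admissible k R /\ dis R = Finite r.

Lemma twice k X Y : Rbar_mult 2 (dGH k X Y) = Glb_Rbar (Sset k X Y).
Proof. unfold dGH. apply twice_half. Qed.

Lemma upper_from_R k (X Y : MetricSpace) (R : X -> Y -> Prop) m :
  nonempty X -> admissible k R -> Rbar_le (dis R) (Finite m) -> Rbar_le (Glb_Rbar (Sset k X Y)) (Finite m).
Proof.
  intros HX HA Hd. pose proof (dis_nonneg R (proj1 HA) HX) as H0.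
  destruct (dis R) as [r| |] eqn:E; simpl in Hd, H0; try contradiction.
  apply Rbar_le_trans with (Finite r); [|exact Hd].
  apply (proj1 (Glb_Rbar_correct _)). exists R; auto.
Qed.

Lemma G3core k (X Y : MetricSpace) r : Sset k X Y r ->
  Rbar_le (diam X) (Rbar_plus (diam Y) (Finite r)) /\ Rbar_le (diam Y) (Rbar_plus (diam X) (Finite r)).
Proof.
  intros [R [[[H1 H2] _] HD]]. split; apply diam_lub.
  - intros x x'. destruct (H1 x) as [y Hy]. destruct (H1 x') as [y' Hy'].
    pose proof (dis_ge R x x' y y' Hy Hy') as H. rewrite HD in H. simpl in H.
    apply Rbar_le_trans with (Finite (Defs.dist y y' + r)).
    + simpl. apply Rabs_le_between in H. lra.
    + apply (Rbar_plus_le_compat (Finite (Defs.dist y y')) (diam Y) (Finite r) (Finite r));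
        [apply diam_ge|apply Rbar_le_refl].
  - intros y y'. destruct (H2 y) as [x Hx]. destruct (H2 y') as [x' Hx'].
    pose proof (dis_ge R x x' y y' Hx Hx') as H. rewrite HD in H. simpl in H.
    apply Rbar_le_trans with (Finite (Defs.dist x x' + r)).
    + simpl. apply Rabs_le_between in H. lra.
    + apply (Rbar_plus_le_compat (Finite (Defs.dist x x')) (diam X) (Finite r) (Finite r));
        [apply diam_ge|apply Rbar_le_refl].
Qed.

Lemma G3 k (X Y : MetricSpace) : nonempty X -> nonempty Y ->
  (diam X <> p_infty \/ diam Y <> p_infty) ->
  Rbar_le (Rbar_abs (Rbar_minus (diam X) (diam Y))) (Glb_Rbar (Sset k X Y)).
Proof.
  intros HX HY Hf. apply (proj2 (Glb_Rbar_correct _)). intros r Sr.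
  destruct (G3core k X Y r Sr) as [C1 C2].
  pose proof (diam_nonneg X HX). pose proof (diam_nonneg Y HY).
  destruct (diam X) as [a| |], (diam Y) as [b| |]; simpl in *; try contradiction;
  try (destruct Hf as [Hf|Hf]; congruence).
  unfold Rabs; destruct (Rcase_abs (a + - b)); lra.
Qed.

Lemma G2 k (X Y : MetricSpace) : nonempty X -> nonempty Y ->
  Rbar_le (Glb_Rbar (Sset k X Y)) (Rbar_max (diam X) (diam Y)).
Proof.
  intros HX HY.
  assert (Hm : exists M, Rbar_max (diam X) (diam Y) = M /\ Rbar_le (diam X) M /\ Rbar_le (diam Y) M).
  { unfold Rbar_max. destruct (Rbar_le_dec (diam X) (diam Y)) as [H|H].
    - exists (diam Y). repeat split; auto. apply Rbar_le_refl.
    - exists (diam X). repeat split; [apply Rbar_le_refl|]. apply Rbar_lt_le, Rbar_not_le_lt, H. }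
  destruct Hm as [M [-> [HXM HYM]]].
  pose proof (diam_nonneg X HX) as H0.
  destruct M as [m| |].
  - apply (upper_from_R k X Y (fun _ _ => True)); auto. apply full_adm; auto.
    apply dis_lub. intros x x' y y' _ _.
    pose proof (Rbar_le_trans _ _ _ (diam_ge X x x') HXM). pose proof (Rbar_le_trans _ _ _ (diam_ge Y y y') HYM).
    simpl in *. pose proof (dist_nonneg X x x'). pose proof (dist_nonneg Y y y').
    apply Rabs_le. lra.
  - destruct (Glb_Rbar _); simpl; auto.
  - destruct (diam X); simpl in *; contradiction.
Qed.

Lemma fin_ne a : Finite a <> p_infty.
Proof. discriminate. Qed.

Lemma squeeze k (A B : MetricSpace) a b : nonempty A -> nonempty B ->
  diam A = Finite a -> diam B = Finite b -> (a = 0 \/ b = 0) ->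
  Glb_Rbar (Sset k A B) = Finite (Rabs (a - b)).
Proof.
  intros HA HB Ea Eb Hab.
  pose proof (diam_nonneg A HA) as Na. pose proof (diam_nonneg B HB) as Nb.
  pose proof (G2 k A B HA HB) as U. pose proof (G3 k A B HA HB) as L.
  rewrite Ea, Eb in *. simpl in Na, Nb.
  specialize (L (or_introl (fin_ne _))).
  apply Rbar_le_antisym.
  - unfold Rbar_max in U. destruct (Rbar_le_dec (Finite a) (Finite b)) as [H|H]; simpl in H;
    eapply Rbar_le_trans; try exact U; simpl;
    destruct Hab; subst; rewrite ?Rminus_0_r, ?Rminus_0_l, ?Rabs_Ropp, ?Rabs_pos_eq; lra.
  - simpl in L. exact L.
Qed.

Lemma disc_sc (A B : MetricSpace) (f : A -> B -> Prop) : discrete A ->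
  upper_semicont f /\ lower_semicont f.
Proof.
  intros HD.
  assert (Hop : forall x : A, is_open (fun x' => x' = x)).
  { intros x x' ->. destruct (HD x) as [e [He H]]. exists e. split; auto. }
  split.
  - intros x U HU Hx. exists (fun x' => x' = x). split; [apply Hop|]. split; [reflexivity|].
    intros x' -> y Hy. auto.
  - intros x U HU [y Hy]. exists (fun x' => x' = x). split; [apply Hop|]. split; [reflexivity|].
    intros x' ->. eauto.
Qed.

Lemma mono k (A B : MetricSpace) : Rbar_le (dGH GH_all A B) (dGH k A B).
Proof.
  unfold dGH. apply half_le. apply (proj2 (Glb_Rbar_correct _)). intros r [R [HA HD]].
  apply (proj1 (Glb_Rbar_correct _)). exists R. split; auto. split; [exact (proj1 HA)|exact I].
Qed.

Theorem mainTheorem11 :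
  forall (k : gh_kind) (X Y : MetricSpace), nonempty X -> nonempty Y ->
  (* (1) *)
  Rbar_mult 2 (dGH k Delta1 X) = diam X /\
  (* (2) *)
  Rbar_le (Rbar_mult 2 (dGH k X Y)) (Rbar_max (diam X) (diam Y)) /\
  (* (3) *)
  ((diam X <> p_infty \/ diam Y <> p_infty) ->
     Rbar_le (Rbar_abs (Rbar_minus (diam X) (diam Y))) (Rbar_mult 2 (dGH k X Y))) /\
  (* (4) *)
  (diam X <> p_infty -> forall l m : R, 0 <= l -> 0 <= m ->
     Rbar_mult 2 (dGH k (scale l X) (scale m X)) = Rbar_mult (Rabs (l - m)) (diam X)) /\
  (* (5) *)
  (forall l : R, 0 < l -> dGH k (scale l X) (scale l Y) = Rbar_mult l (dGH k X Y)) /\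
  (diam X <> p_infty -> diam Y <> p_infty ->
     dGH k (scale 0 X) (scale 0 Y) = Rbar_mult 0 (dGH k X Y)) /\
  (* (6) *)
  (discrete X -> discrete Y -> dGH k X Y = dGH GH_all X Y) /\
  (* (7) *)
  (forall Xs : nat -> MetricSpace,
     Rbar_to0 (fun n => dGH k (Xs n) X) -> Rbar_to0 (fun n => dGH GH_all (Xs n) X)).
Proof.
  intros k X Y HX HY.
  assert (HD : nonempty Delta1) by (exists tt; auto).
  pose proof (diam_nonneg X HX) as NX.
  split; [|split; [|split; [|split; [|split; [|split; [|split]]]]]].
  -
    rewrite twice. apply Rbar_le_antisym.
    + pose proof (G2 k Delta1 X HD HX) as H. rewrite diam_Delta1 in H. unfold Rbar_max in H.
      destruct (Rbar_le_dec (Finite 0) (diam X)); [exact H|contradiction].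
    + destruct (diam X) as [a| |] eqn:E.
      * pose proof (G3 k Delta1 X HD HX) as H. rewrite diam_Delta1, E in H.
        specialize (H (or_introl (fin_ne _))). simpl in H, NX.
        rewrite Rplus_0_l, Rabs_Ropp, Rabs_pos_eq in H by lra. exact H.
      * apply (proj2 (Glb_Rbar_correct _)). intros r Sr.
        destruct (G3core k Delta1 X r Sr) as [_ C]. rewrite E, diam_Delta1 in C. simpl in C. contradiction.
      * simpl in NX. contradiction.
  - rewrite twice. apply G2; auto.
  - intros H. rewrite twice. apply G3; auto.
  - intros Hf l m hl hm. destruct (diam X) as [D| |] eqn:ED; [|congruence|simpl in NX; contradiction].
    simpl in NX. rewrite twice. rewrite mfin.
    destruct (Rlt_dec 0 l) as [Hl|Hl]; destruct (Rlt_dec 0 m) as [Hm|Hm].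
    + destruct (scale_pos_eq l X Hl) as [h1 ->]. destruct (scale_pos_eq m X Hm) as [h2 ->].
      apply Rbar_le_antisym.
      * apply (upper_from_R k (scale_pos l h1 X) (scale_pos m h2 X) (fun (x : scale_pos l h1 X) (y : scale_pos m h2 X) => x = y)); [exact HX|apply id_adm|].
        apply dis_lub. intros x x' y y' <- <-. simpl.
        replace (l * Defs.dist (m:=X) x x' - m * Defs.dist (m:=X) x x') with ((l - m) * Defs.dist (m:=X) x x') by ring.
        rewrite Rabs_mult, (Rabs_pos_eq (Defs.dist (m:=X) x x')) by apply dist_nonneg.
        apply Rmult_le_compat_l; [apply Rabs_pos|].
        pose proof (diam_ge X x x') as G. rewrite ED in G. exact G.
      * pose proof (G3 k (scale_pos l h1 X) (scale_pos m h2 X) HX HX) as H.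
        rewrite !diam_scale, ED, !mfin in H.
        specialize (H (or_introl (fin_ne _))). simpl in H.
        replace (l * D + - (m * D)) with ((l - m) * D) in H by ring.
        rewrite Rabs_mult, (Rabs_pos_eq D) in H by lra. exact H.
    + assert (m = 0) by lra. subst m.
      destruct (scale_pos_eq l X Hl) as [h1 ->]. rewrite (scale_0 0 X Hm).
      rewrite (squeeze k (scale_pos l h1 X) Delta1 (l * D) 0 HX HD); [| rewrite diam_scale, ED; reflexivity | apply diam_Delta1 | auto].
      f_equal. rewrite !Rminus_0_r, Rabs_mult, (Rabs_pos_eq D); lra.
    + assert (l = 0) by lra. subst l.
      destruct (scale_pos_eq m X Hm) as [h2 ->]. rewrite (scale_0 0 X Hl).
      rewrite (squeeze k Delta1 (scale_pos m h2 X) 0 (m * D) HD HX); [| apply diam_Delta1 | rewrite diam_scale, ED; reflexivity | auto].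
      f_equal. rewrite !Rminus_0_l, !Rabs_Ropp, Rabs_mult, (Rabs_pos_eq D); lra.
    + assert (l = 0) by lra. assert (m = 0) by lra. subst l m.
      rewrite (scale_0 0 X Hl).
      rewrite (squeeze k _ _ 0 0 HD HD); [| apply diam_Delta1 | apply diam_Delta1 | auto].
      f_equal. rewrite Rminus_0_r, Rabs_R0. ring.
  - intros l Hl. destruct (scale_pos_eq l X Hl) as [h1 ->]. destruct (scale_pos_eq l Y Hl) as [h2 ->].
    change (Rbar_mult (/2) (Glb_Rbar (Sset k (scale_pos l h1 X) (scale_pos l h2 Y)))
            = Rbar_mult l (Rbar_mult (/2) (Glb_Rbar (Sset k X Y)))).
    rewrite <- half_comm by exact Hl. f_equal. rewrite <- Glb_scale by exact Hl.
    apply Glb_Rbar_eqset. intros r. split.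
    + intros [R [HA HDR]]. rewrite dis_scale in HDR. apply adm_scale in HA.
      destruct (dis (X := X) (Y := Y) R) as [s| |] eqn:E.
      * exists s. split; [exists R; split; auto|]. rewrite mfin in HDR. injection HDR. auto.
      * rewrite mpinf in HDR by exact Hl. discriminate.
      * rewrite mminf in HDR by exact Hl. discriminate.
    + intros [s [[R [HA HDR]] ->]]. exists R. split; [apply adm_scale; exact HA|].
      rewrite dis_scale, HDR. reflexivity.
  - intros _ _. assert (H0 : ~ 0 < 0) by lra. rewrite !(scale_0 0 _ H0), Rbar_mult_0_l.
    change (Rbar_mult (/2) (Glb_Rbar (Sset k Delta1 Delta1)) = Finite 0).
    rewrite (squeeze k _ _ 0 0 HD HD); [| apply diam_Delta1 | apply diam_Delta1 | auto].
    rewrite mfin, Rminus_0_r, Rabs_R0, Rmult_0_r. reflexivity.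
  - intros DX DY. unfold dGH. f_equal. apply Glb_Rbar_eqset. intros r. split.
    + intros [R [HA HDR]]. exists R. split; auto. split; [exact (proj1 HA)|exact I].
    + intros [R [HA HDR]]. exists R. split; auto. split; [exact (proj1 HA)|].
      pose proof (disc_sc X Y R DX). pose proof (disc_sc Y X (rel_inv R) DY).
      unfold continuous_svm. destruct k; tauto.
  - intros Xs H eps Heps. destruct (H eps Heps) as [N HN]. exists N. intros n Hn.
    eapply Rbar_le_lt_trans; [apply mono|]. apply HN; exact Hn.
Qed.
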